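(* Let $\Omega$ be a finite set, $\Lambda_0^\omega>0$ for $\omega\in\Omega$, and $\Lambda_m^\omega=m\Lambda_0^\omega$ for $m\in\mathbb{N}$. Fix $\beta>0$ and $\omega^{key}\in\Omega$, and let $n_m=\Lambda_m^{\omega^{key}}+\beta\sqrt{\Lambda_m^{\omega^{key}}}$. Then $\lim_{m\to\infty}\bar\alpha(n_m,\Lambda_m^{\omega^{key}})$ exists and lies in $(0,1)$; for every $\omega$ with $\Lambda_0^\omega>\Lambda_0^{\omega^{key}}$, $\lim_{m\to\infty}\bar\alpha(n_m,\Lambda_m^\omega)=1$; and for every $\omega$ with $\Lambda_0^\omega<\Lambda_0^{\omega^{key}}$, $\lim_{m\to\infty}\bar\alpha(n_m,\Lambda_m^\omega)=0$.
   Context: For $\lambda>0$ and real $n\ge 0$, the continuous Erlang-C function is $\bar\alpha(n,\lambda)=\min\Big\{1,\big[\lambda\int_0^\infty t e^{-\lambda t}(1+t)^{n-1}\,dt\big]^{-1}\Big\}$; for $n\ge\lambda$ the minimum is attained by the second term, for $n<\lambda$ it equals 1, and for integer $n>\lambda$ it equals the Erlang-C probability that an arriving customer waits in an $M/M/n$ queue with arrival rate $\lambda$ and service rate 1. *)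

(* Defs.v *)
From Stdlib Require Import Reals Lra ClassicalEpsilon List.
Open Scope R_scope.

Definition improper_integral_from (f : R -> R) (a l : R) : Prop :=
  (forall b, a <= b -> inhabited (Riemann_integrable f a b)) /\
  (forall eps, 0 < eps -> exists B, a <= B /\
     forall b (pr : Riemann_integrable f a b), B <= b -> Rabs (RiemannInt pr - l) < eps).

(* The value of the improper integral (chosen by classical description;
   it is unique whenever it exists). *)
Definition improper_int (f : R -> R) (a : R) : R :=
  epsilon (inhabits 0) (fun l => improper_integral_from f a l).

Definition erlang_integrand (n lambda : R) (t : R) : R :=
  t * exp (- lambda * t) * Rpower (1 + t) (n - 1).

Definition alpha_bar (n lambda : R) : R :=
  Rmin 1 (/ (lambda * improper_int (erlang_integrand n lambda) 0)).

(* Main.v *)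
Require Import Defs.
From Stdlib Require Import Reals Lra Psatz ClassicalEpsilon List.
From Coquelicot Require Import Coquelicot.
Open Scope R_scope.
Ltac fl := field; repeat split; try (intro; lra); try lra.


Lemma ln_le_sub1 z : 0 < z -> ln z <= z - 1.
Proof.
  intros Hz. rewrite <- (ln_exp (z-1)).
  apply ln_le; [lra|]. pose proof (exp_ineq1_le (z-1)). lra.
Qed.

Lemma cont_R (f : R -> R) x : ex_derive f x -> continuous f x.
Proof. intros H. exact (ex_derive_continuous f x H). Qed.

Lemma deriv_mono (F dF : R -> R) x : 0 <= x ->
  (forall u, 0 <= u <= x -> is_derive F u (dF u)) ->
  (forall u, 0 <= u <= x -> continuous dF u) ->
  (forall u, 0 < u < x -> 0 <= dF u) -> F 0 <= F x.
Proof.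
  intros Hx Hd Hc Hp.
  assert (H: is_RInt dF 0 x (minus (F x) (F 0))).
  { apply (is_RInt_derive (V:=R_CompleteNormedModule)); intros u Hu; rewrite Rmin_left, Rmax_right in Hu by lra; auto. }
  assert (0 <= RInt dF 0 x).
  { apply RInt_ge_0; auto. eexists; eauto. }
  rewrite (is_RInt_unique _ _ _ _ H) in H0. unfold minus, plus, opp in H0; simpl in H0. lra.
Qed.

Lemma ln1p_lower x : 0 <= x -> x - x^2/2 <= ln (1+x).
Proof.
  intros Hx.
  set (F := fun u => ln (1+u) - (u - u^2/2)).
  assert (F 0 <= F x).
  { apply (deriv_mono F (fun u => u^2/(1+u))); auto.
    - intros u Hu. unfold F. auto_derive. lra. field. lra.
    - intros u Hu. apply cont_R. auto_derive. lra.
    - intros u Hu. apply Rle_mult_inv_pos; [nra|lra]. }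
  unfold F in H. rewrite Rplus_0_r, ln_1 in H. lra.
Qed.

Lemma ln1p_upper x : 0 <= x -> ln (1+x) <= x - x^2/(2*(1+x)).
Proof.
  intros Hx.
  set (F := fun u => (u - u^2/(2*(1+u))) - ln (1+u)).
  assert (F 0 <= F x).
  { apply (deriv_mono F (fun u => u^2/(2*(1+u)^2))); auto.
    - intros u Hu. unfold F. auto_derive. lra. field. lra.
    - intros u Hu. apply cont_R. auto_derive. nra.
    - intros u Hu. apply Rle_mult_inv_pos; nra. }
  unfold F in H. rewrite Rplus_0_r, ln_1 in H. replace (0 - 0^2/(2*(1+0)) - 0) with 0 in H by field. lra.
Qed.

Lemma ln1p_nonneg x : 0 <= x -> 0 <= ln (1+x).
Proof. intros. rewrite <- ln_1. apply ln_le; lra. Qed.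

Lemma ln1p_le x : 0 <= x -> ln (1+x) <= x.
Proof. intros. pose proof (ln_le_sub1 (1+x)). lra. Qed.

Lemma exp_le_exp x y : x <= y -> exp x <= exp y.
Proof. intros [H|H]. left; apply exp_increasing; auto. subst; lra. Qed.

Lemma Rabs_le_inv u d : Rabs u <= d -> - d <= u <= d.
Proof. intros H. pose proof (Rle_abs u). pose proof (Rle_abs (-u)). rewrite Rabs_Ropp in H1. lra. Qed.


Definition contp (f : R -> R) := forall x, 0 <= x -> continuous f x.

Lemma exR f a b : contp f -> 0 <= a -> a <= b -> ex_RInt f a b.
Proof.
  intros Hc Ha Hab. apply (ex_RInt_continuous (V:=R_CompleteNormedModule)).
  intros z Hz. rewrite Rmin_left, Rmax_right in Hz by lra. apply Hc; lra.
Qed.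

Lemma RInt_split f a s b : contp f -> 0 <= a -> a <= s -> s <= b ->
  RInt f a b = RInt f a s + RInt f s b.
Proof.
  intros Hc Ha H1 H2. rewrite <- (RInt_Chasles (V:=R_CompleteNormedModule) f a s b).
  reflexivity. apply exR; auto; lra. apply exR; auto; lra.
Qed.

Lemma RInt_mono_b f b0 b : contp f -> (forall x, 0 <= x -> 0 <= f x) ->
  0 <= b0 -> b0 <= b -> RInt f 0 b0 <= RInt f 0 b.
Proof.
  intros Hc Hp H0 H1. rewrite (RInt_split f 0 b0 b) by (auto; lra).
  assert (0 <= RInt f b0 b). { apply RInt_ge_0; auto. apply exR; auto; lra. intros; apply Hp; lra. }
  lra.
Qed.

Lemma improper_unique f a l1 l2 :
  improper_integral_from f a l1 -> improper_integral_from f a l2 -> l1 = l2.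
Proof.
  intros [Hi1 H1] [_ H2].
  destruct (Req_dec l1 l2) as [|Hne]; auto. exfalso.
  set (e := Rabs (l1 - l2) / 2).
  assert (He : 0 < e). { unfold e. assert (l1 - l2 <> 0) by lra. apply Rabs_pos_lt in H. lra. }
  destruct (H1 e He) as [B1 [HB1 HB1']]. destruct (H2 e He) as [B2 [HB2 HB2']].
  set (b := Rmax B1 B2).
  assert (a <= b) by (unfold b; apply Rle_trans with B1; auto; apply Rmax_l).
  destruct (Hi1 b H) as [pr].
  specialize (HB1' b pr (Rmax_l _ _)). specialize (HB2' b pr (Rmax_r _ _)).
  unfold e in *. 
  assert (Rabs (l1 - l2) <= Rabs (RiemannInt pr - l2) + Rabs (RiemannInt pr - l1)).
  { replace (l1 - l2) with ((RiemannInt pr - l2) - (RiemannInt pr - l1)) by ring.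
    eapply Rle_trans. apply Rabs_triang. rewrite Rabs_Ropp. lra. }
  lra.
Qed.

Lemma improper_lub f : contp f -> (forall x, 0 <= x -> 0 <= f x) ->
  (exists M, forall b, 0 <= b -> RInt f 0 b <= M) ->
  (forall b, 0 <= b -> RInt f 0 b <= improper_int f 0) /\
  (forall M', (forall b, 0 <= b -> RInt f 0 b <= M') -> improper_int f 0 <= M').
Proof.
  intros Hc Hp [M HM].
  set (E := fun y => exists b, 0 <= b /\ y = RInt f 0 b).
  destruct (completeness E) as [l [Hub Hl]].
  { exists M. intros y [b [Hb ->]]. auto. }
  { exists (RInt f 0 0). exists 0. split; auto; lra. }
  assert (Himp : improper_integral_from f 0 l).
  { split.
    - intros b Hb. constructor. apply ex_RInt_Reals_0. apply exR; auto; lra.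
    - intros eps Heps.
      assert (exists b0, 0 <= b0 /\ l - eps < RInt f 0 b0) as [b0 [Hb0 Hb0']].
      { apply NNPP. intros Hn. assert (l <= l - eps); [|lra].
        apply Hl. intros y [b [Hb ->]]. apply Rnot_lt_le. intros Hlt. apply Hn. eauto. }
      exists b0. split; auto. intros b pr Hb.
      rewrite <- RInt_Reals.
      assert (RInt f 0 b0 <= RInt f 0 b) by (apply RInt_mono_b; auto).
      assert (RInt f 0 b <= l) by (apply Hub; exists b; split; auto; lra).
      apply Rabs_def1; lra. }
  assert (Heq : improper_int f 0 = l).
  { unfold improper_int.
    apply (improper_unique f 0). 2: exact Himp.
    apply (epsilon_spec (inhabits 0) (fun l => improper_integral_from f 0 l)). eauto. }
  rewrite Heq. split. idtac.
  - intros b Hb. apply Hub. exists b. split; auto.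
  - intros M0 HM0. apply Hl. intros y [b [Hb ->]]. auto.
Qed.


Lemma RInt_FTC F dF a b : a <= b ->
  (forall x, a <= x <= b -> is_derive F x (dF x)) ->
  (forall x, a <= x <= b -> continuous dF x) -> @eq R (RInt dF a b) (F b - F a).
Proof.
  intros Hab Hd Hc.
  assert (H: is_RInt dF a b (minus (F b) (F a))).
  { apply (is_RInt_derive (V:=R_CompleteNormedModule)); intros u Hu; rewrite Rmin_left, Rmax_right in Hu by lra; auto. }
  rewrite (is_RInt_unique _ _ _ _ H). reflexivity.
Qed.

Lemma RInt_texp E c b : 0 < c -> 0 <= b -> 0 <= E ->
  RInt (fun t => E * (t * exp (- c * t))) 0 b <= E / c^2.
Proof.
  intros Hc Hb HE.
  rewrite (RInt_FTC (fun t => - E * (1 + c*t) * exp (- c * t) / c^2)); auto.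
  - replace (- c * 0) with 0 by ring. rewrite exp_0.
    assert (0 <= E * (1 + c*b) * exp (- c * b) / c^2).
    { apply Rmult_le_pos. apply Rmult_le_pos. apply Rmult_le_pos; nra. left; apply exp_pos.
      left; apply Rinv_0_lt_compat; nra. }
    replace (- E * (1 + c * b) * exp (- c * b) / c ^ 2 - - E * (1 + c * 0) * 1 / c ^ 2)
      with (E/c^2 - E * (1 + c*b) * exp (- c * b) / c^2) by (field; lra). lra.
  - intros x Hx. auto_derive. auto. field. lra.
  - intros x Hx. apply cont_R. auto_derive. auto.
Qed.

Lemma RInt_cexp C S T : S <= T -> 0 <= C ->
  RInt (fun s => C * exp (- s)) S T <= C * exp (- S).
Proof.
  intros H HC.
  rewrite (RInt_FTC (fun s => - C * exp (- s))); auto.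
  - assert (0 <= C * exp (-T)) by (apply Rmult_le_pos; auto; left; apply exp_pos). lra.
  - intros x Hx. auto_derive. auto. ring.
  - intros x Hx. apply cont_R. auto_derive. auto.
Qed.

Lemma RInt_gauss B : 0 <= B ->
  @eq R (RInt (fun s => s * exp (- s^2/2)) 0 B) (1 - exp (- B^2/2)).
Proof.
  intros H.
  rewrite (RInt_FTC (fun s => - exp (- s^2/2))); auto.
  - replace (- 0^2/2) with 0 by (simpl; lra). rewrite exp_0. ring.
  - intros x Hx. auto_derive. auto. replace (- (x * (x * 1)) * / 2) with (- x ^ 2 / 2) by (unfold Rdiv; ring). field.
  - intros x Hx. apply cont_R. auto_derive. auto.
Qed.

Lemma erl_eq n l t : erlang_integrand n l t = t * exp (- l * t) * exp ((n-1) * ln (1+t)).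
Proof. reflexivity. Qed.

Lemma erl_cont n l : contp (erlang_integrand n l).
Proof.
  intros x Hx. apply cont_R. unfold erlang_integrand, Rpower. auto_derive. lra.
Qed.

Lemma erl_nonneg n l t : 0 <= t -> 0 <= erlang_integrand n l t.
Proof.
  intros Ht. unfold erlang_integrand, Rpower.
  apply Rmult_le_pos. apply Rmult_le_pos; auto; left; apply exp_pos. left; apply exp_pos.
Qed.

Lemma erl_bounded n l : 0 < l -> 1 < n ->
  exists M, forall b, 0 <= b -> RInt (erlang_integrand n l) 0 b <= M.
Proof.
  intros Hl Hn.
  set (k := l / (2*(n-1))).
  assert (Hk : 0 < k) by (unfold k; apply Rdiv_lt_0_compat; lra).
  set (K := l/2 - (n-1) * (1 + ln k)).
  exists (exp K / (l/2)^2). intros b Hb.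
  eapply Rle_trans. 2: apply (RInt_texp (exp K) (l/2) b); auto; try lra; left; apply exp_pos.
  apply RInt_le; auto.
  - apply exR; auto. apply erl_cont. lra.
  - apply (ex_RInt_continuous (V:=R_CompleteNormedModule)). intros z _. apply cont_R. auto_derive. auto.
  - intros t Ht. rewrite erl_eq.
    assert (Hln : ln (1+t) <= k*(1+t) - 1 - ln k).
    { pose proof (ln_le_sub1 (k*(1+t))). rewrite ln_mult in H by lra. nra. }
    assert (Hx : (n-1) * ln (1+t) <= l/2 * t + K).
    { unfold K. assert ((n-1)*k = l/2) by (unfold k; field; lra). nra. }
    rewrite Rmult_assoc, <- exp_plus.
    replace (exp K * (t * exp (- (l/2) * t))) with (t * exp (K + - (l/2) * t)) by (rewrite exp_plus; ring).
    apply Rmult_le_compat_l. lra. apply exp_le_exp. lra.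
Qed.


Lemma erl_lub n l : 0 < l -> 1 < n ->
  (forall b, 0 <= b -> RInt (erlang_integrand n l) 0 b <= improper_int (erlang_integrand n l) 0) /\
  (forall M', (forall b, 0 <= b -> RInt (erlang_integrand n l) 0 b <= M') ->
      improper_int (erlang_integrand n l) 0 <= M').
Proof.
  intros. apply improper_lub. apply erl_cont. intros; apply erl_nonneg; auto.
  apply erl_bounded; auto.
Qed.

Lemma large_m K : exists N, forall m, (N <= m)%nat -> K <= INR m.
Proof.
  destruct (INR_unbounded K) as [N HN]. exists N. intros m Hm.
  apply le_INR in Hm. lra.
Qed.

Lemma sqrt_le_lin x k : 0 <= x -> 0 < k -> sqrt x <= x / k + k / 4.
Proof.
  intros Hx Hk. pose proof (sqrt_sqrt x Hx). pose proof (sqrt_pos x).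
  set (s := sqrt x) in *. rewrite <- H.
  apply Rmult_le_reg_l with k; auto.
  replace (k * (s * s / k + k / 4)) with (s*s + k*k/4) by fl. clearbody s. pose proof (pow2_ge_0 (s - k/2)). nra.
Qed.

Lemma erl_pos n l : 1 <= n -> 0 < RInt (erlang_integrand n l) 0 1.
Proof.
  intros Hn. apply RInt_gt_0. lra.
  - intros x Hx. unfold erlang_integrand, Rpower. apply Rmult_lt_0_compat.
    apply Rmult_lt_0_compat. lra. apply exp_pos. apply exp_pos.
  - intros x Hx. apply erl_cont. lra.
Qed.

Lemma case_big a b beta : 0 < a -> a < b -> 0 < beta ->
  Un_cv (fun m => alpha_bar (INR m * a + beta * sqrt (INR m * a)) (INR m * b)) 1.
Proof.
  intros Ha Hab Hbeta eps Heps.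
  remember (b - a) as d eqn:Hd_def. remember (4*beta*a/d) as k eqn:Hk_def.
  assert (Hd : 0 < d) by lra.
  assert (Hk : 0 < k) by (rewrite Hk_def; apply Rdiv_lt_0_compat; nra).
  destruct (large_m (Rmax (Rmax (1/a + 1) (beta*k/d)) (Rmax (4*b/(d*d)) 1))) as [N HN].
  exists N. intros m Hm. specialize (HN m Hm).
  remember (INR m) as M eqn:HM.
  assert (H1 : 1/a + 1 <= M) by (eapply Rle_trans; [|exact HN]; eapply Rle_trans; [apply Rmax_l|apply Rmax_l]).
  assert (H2 : beta*k/d <= M) by (eapply Rle_trans; [|exact HN]; eapply Rle_trans; [apply Rmax_r|apply Rmax_l]).
  assert (H3 : 4*b/(d*d) <= M) by (eapply Rle_trans; [|exact HN]; eapply Rle_trans; [apply Rmax_l|apply Rmax_r]).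
  assert (H4 : 1 <= M) by (eapply Rle_trans; [|exact HN]; eapply Rle_trans; [apply Rmax_r|apply Rmax_r]).
  assert (HMa : 1 < M * a).
  { assert (a * (1/a + 1) <= a * M) by (apply Rmult_le_compat_l; lra).
    replace (a * (1/a+1)) with (1 + a) in H by fl. nra. }
  remember (sqrt (M * a)) as s eqn:Hs_def.
  assert (Hs : 0 <= s) by (rewrite Hs_def; apply sqrt_pos).
  assert (Hsq : s <= M * a / k + k/4) by (rewrite Hs_def; apply sqrt_le_lin; nra).
  remember (M * a + beta * s) as n eqn:Hn_def. remember (M * b) as l eqn:Hl_def.
  assert (Hn : 1 < n) by nra.
  assert (Hl : 0 < l) by nra.
  remember (l - n + 1) as c eqn:Hc_def.
  assert (Hc : M * d / 2 <= c).
  { assert (E1 : beta * (M * a / k) = M * d / 4) by (rewrite Hk_def; fl).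
    assert (E2 : beta * k <= M * d).
    { apply Rmult_le_compat_r with (r:=d) in H2; [|lra].
      replace (beta*k/d*d) with (beta*k) in H2 by fl. lra. }
    assert (E3 : beta * s <= beta * (M * a / k) + beta * (k/4)).
    { rewrite <- Rmult_plus_distr_l. apply Rmult_le_compat_l; lra. }
    assert (E4 : l - M * a = M * d) by (rewrite Hl_def, Hd_def; ring).
    lra. }
  assert (Hcpos : 0 < c) by nra.
  assert (Hlc : l <= c^2).
  { assert (M * b <= M * M * d * d / 4).
    { apply Rmult_le_compat_r with (r := d*d) in H3; [|nra].
      replace (4*b/(d*d)*(d*d)) with (4*b) in H3 by fl. nra. }
    assert (M * M * d * d / 4 <= c^2).
    { assert (0 <= M * d / 2) by nra. 
      replace (M * M * d * d / 4) with ((M*d/2)*(M*d/2)) by field. simpl. rewrite Rmult_1_r.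
      apply Rmult_le_compat; lra. }
    lra. }
  destruct (erl_lub n l Hl Hn) as [Hlow Hup].
  remember (improper_int (erlang_integrand n l) 0) as I eqn:HI_def.
  assert (HI : 0 < I).
  { eapply Rlt_le_trans. apply (erl_pos n l); lra. apply Hlow; lra. }
  assert (HIu : I <= 1 / c^2).
  { apply Hup. intros B HB.
    eapply Rle_trans. 2: { eapply Rle_trans. apply (RInt_texp 1 c B); auto; lra. right; fl. }
    apply RInt_le; auto.
    - apply exR; auto. apply erl_cont. lra.
    - apply (ex_RInt_continuous (V:=R_CompleteNormedModule)). intros z _. apply cont_R. auto_derive. auto.
    - intros t Ht. rewrite erl_eq. rewrite Rmult_assoc, <- exp_plus. rewrite Rmult_1_l.
      apply Rmult_le_compat_l. lra. apply exp_le_exp.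
      pose proof (ln1p_le t). pose proof (ln1p_nonneg t).
      assert ((n-1) * ln (1+t) <= (n-1) * t) by (apply Rmult_le_compat_l; lra).
      rewrite Hc_def. nra. }
  assert (HlI : l * I <= 1).
  { apply Rmult_le_compat_l with (r := l) in HIu; [|lra].
    replace (l * (1/c^2)) with (l / c^2) in HIu by fl.
    assert (l / c^2 <= 1). { apply Rmult_le_reg_r with (c^2). nra. field_simplify; nra. }
    lra. }
  unfold alpha_bar. rewrite <- HI_def.
  rewrite Rmin_left.
  - unfold Rdist. rewrite Rminus_diag, Rabs_R0. lra.
  - assert (0 < l * I) by nra.
    apply Rmult_le_reg_l with (l * I); auto. rewrite Rinv_r by lra. lra.
Qed.

Lemma RInt_const_R (v a b : R) : @eq R (RInt (fun _ => v) a b) ((b - a) * v).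
Proof. rewrite RInt_const. reflexivity. Qed.

Lemma case_small a b beta : 0 < b -> b < a -> 0 < beta ->
  Un_cv (fun m => alpha_bar (INR m * a + beta * sqrt (INR m * a)) (INR m * b)) 0.
Proof.
  intros Hb Hab Hbeta eps Heps.
  remember ((a-b)/a) as c eqn:Hc_def.
  assert (Hc : 0 < c) by (rewrite Hc_def; apply Rdiv_lt_0_compat; lra).
  assert (Hac : a * c = a - b) by (rewrite Hc_def; fl).
  remember (c*(a-b)/(4*b)) as h eqn:Hh_def.
  assert (Hh : 0 < h) by (rewrite Hh_def; apply Rdiv_lt_0_compat; nra).
  assert (Hbh : b * h = c*(a-b)/4) by (rewrite Hh_def; fl).
  remember (ln (1+c)) as L eqn:HL_def.
  assert (HL0 : 0 <= L) by (rewrite HL_def; apply ln1p_nonneg; lra).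
  assert (HL1 : c - c^2/2 <= L) by (rewrite HL_def; apply ln1p_lower; lra).
  remember (b*h*c*exp (-L)) as K1 eqn:HK1_def.
  assert (HK1 : 0 < K1) by (rewrite HK1_def; pose proof (exp_pos (-L)); repeat apply Rmult_lt_0_compat; auto).
  destruct (large_m (Rmax (1/a + 1) (1/(K1*eps) + 1))) as [N HN].
  exists N. intros m Hm. specialize (HN m Hm).
  remember (INR m) as M eqn:HM.
  assert (H1 : 1/a + 1 <= M) by (eapply Rle_trans; [|exact HN]; apply Rmax_l).
  assert (H2 : 1/(K1*eps) + 1 <= M) by (eapply Rle_trans; [|exact HN]; apply Rmax_r).
  assert (HMa : 1 < M * a).
  { assert (a * (1/a + 1) <= a * M) by (apply Rmult_le_compat_l; lra).
    replace (a * (1/a+1)) with (1 + a) in H by fl. nra. }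
  assert (HM0 : 0 < M).
  { assert (0 < 1/a) by (apply Rdiv_lt_0_compat; lra). lra. }
  remember (sqrt (M * a)) as s eqn:Hs_def.
  assert (Hs : 0 <= s) by (rewrite Hs_def; apply sqrt_pos).
  remember (M * a + beta * s) as n eqn:Hn_def. remember (M * b) as l eqn:Hl_def.
  assert (Hn : 1 < n) by nra.
  assert (Hl : 0 < l) by nra.
  destruct (erl_lub n l Hl Hn) as [Hlow Hup].
  remember (improper_int (erlang_integrand n l) 0) as I eqn:HI_def.
  set (v := c * exp (- l * (c+h)) * exp ((n-1) * L)).
  assert (HIv : h * v <= I).
  { eapply Rle_trans. 2: apply (Hlow (c+h)); lra.
    rewrite (RInt_split _ 0 c (c+h)); try lra. 2: apply erl_cont.
    assert (0 <= RInt (erlang_integrand n l) 0 c).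
    { apply RInt_ge_0. lra. apply exR. apply erl_cont. lra. lra. intros; apply erl_nonneg; lra. }
    assert (h * v <= RInt (erlang_integrand n l) c (c + h)); [|lra].
    assert (Hconst: @eq R (RInt (fun _ => v) c (c+h)) (h*v)) by (rewrite RInt_const_R; ring). rewrite <- Hconst.
    apply RInt_le. lra. apply ex_RInt_const. apply exR. apply erl_cont. lra. lra.
    intros t Ht. rewrite erl_eq. unfold v.
    apply Rmult_le_compat. 
    - apply Rmult_le_pos. lra. left; apply exp_pos.
    - left; apply exp_pos.
    - apply Rmult_le_compat; try lra. left; apply exp_pos. apply exp_le_exp. nra.
    - apply exp_le_exp. apply Rmult_le_compat_l. lra. rewrite HL_def. apply ln_le; lra. }
  assert (Hexp : - L <= - l * (c+h) + (n-1) * L).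
  { assert ((M*a - 1) * L <= (n-1) * L) by (apply Rmult_le_compat_r; nra).
    assert (0 <= M * (a * L - b * (c + h))).
    { apply Rmult_le_pos. lra.
      assert (a * (c - c^2/2) <= a * L) by (apply Rmult_le_compat_l; lra).
      assert (a * (c - c^2/2) = (a-b) - (a-b)*c/2) by (rewrite <- Hac; field).
      assert (b * (c + h) = b * c + c*(a-b)/4) by (rewrite <- Hbh; ring).
      nra. }
    rewrite Hl_def. nra. }
  assert (HlI : M * K1 <= l * I).
  { assert (l * (h*v) <= l * I) by (apply Rmult_le_compat_l; lra).
    assert (M * K1 <= l * (h * v)); [|lra].
    unfold v. rewrite HK1_def, Hl_def.
    replace (M * b * (h * (c * exp (- (M * b) * (c + h)) * exp ((n - 1) * L)))) with (M * b * (h * (c * exp (- (M * b) * (c + h) + (n - 1) * L)))) by (rewrite exp_plus; ring).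
    replace (M * (b * h * c * exp (- L))) with ((M * b) * h * c * exp (-L)) by ring.
    replace (M * b * (h * (c * exp (- (M * b) * (c + h) + (n - 1) * L)))) with
      ((M * b) * h * c * exp (- (M * b) * (c + h) + (n - 1) * L)) by ring.
    apply Rmult_le_compat_l. repeat apply Rmult_le_pos; lra.
    apply exp_le_exp. rewrite <- Hl_def. lra. }
  assert (Hbig : 1/eps < l * I).
  { assert (1/(K1*eps) < M) by lra.
    apply Rmult_lt_compat_l with (r := K1) in H; auto.
    replace (K1 * (1/(K1*eps))) with (1/eps) in H by fl. nra. }
  assert (HlIpos : 0 < l * I).
  { assert (0 < 1/eps) by (apply Rdiv_lt_0_compat; lra). lra. }
  unfold alpha_bar. rewrite <- HI_def.
  unfold Rdist. rewrite Rminus_0_r.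
  assert (Hinv : / (l * I) < eps).
  { apply Rmult_lt_reg_l with (l*I); auto. rewrite Rinv_r by lra.
    apply Rmult_lt_compat_r with (r := eps) in Hbig; auto.
    replace (1/eps*eps) with 1 in Hbig by fl. lra. }
  assert (0 <= Rmin 1 (/ (l*I))).
  { apply Rmin_glb. lra. left; apply Rinv_0_lt_compat; auto. }
  rewrite Rabs_pos_eq; auto.
  eapply Rle_lt_trans. apply Rmin_r. auto.
Qed.


Definition gk (beta r s : R) := s * exp (- r * s) * exp ((r*r + beta*r - 1) * ln (1 + s / r)).
Definition Gf (beta s : R) := s * exp (beta * s - s^2/2).

Lemma gk_cont beta r : 0 < r -> contp (gk beta r).
Proof.
  intros Hr x Hx. apply cont_R. unfold gk. auto_derive.
  assert (0 <= x / r) by (apply Rdiv_le_0_compat; lra). repeat split; try (intro; lra); lra.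
Qed.

Lemma gk_nonneg beta r s : 0 <= s -> 0 <= gk beta r s.
Proof.
  intros. unfold gk. apply Rmult_le_pos. apply Rmult_le_pos; auto; left; apply exp_pos. left; apply exp_pos.
Qed.

Lemma Gf_cont beta : contp (Gf beta).
Proof. intros x Hx. apply cont_R. unfold Gf. auto_derive. auto. Qed.

Lemma Gf_nonneg beta s : 0 <= s -> 0 <= Gf beta s.
Proof. intros. unfold Gf. apply Rmult_le_pos; auto; left; apply exp_pos. Qed.

Lemma bridge beta r b : 0 < r -> 0 <= b ->
  @eq R ((r*r) * RInt (erlang_integrand (r*r + beta*r) (r*r)) 0 b) (RInt (gk beta r) 0 (r*b)).
Proof.
  intros Hr Hb.
  set (f := erlang_integrand (r*r + beta*r) (r*r)).
  set (h := fun y => scal (/r) (f (/r * y + 0))).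
  assert (Hlin := RInt_comp_lin (V:=R_CompleteNormedModule) f (/r) 0 0 (r*b)).
  rewrite Rmult_0_r, !Rplus_0_r in Hlin.
  assert (Eb : / r * (r*b) = b) by (field; lra). rewrite Eb in Hlin.
  specialize (Hlin (exR f 0 b (erl_cont _ _) (Rle_refl 0) Hb)).
  assert (Hh : ex_RInt h 0 (r*b)).
  { unfold h. apply (ex_RInt_scal (V:=R_CompleteNormedModule)). apply (ex_RInt_continuous (V:=R_CompleteNormedModule)).
    intros z Hz. rewrite Rmin_left, Rmax_right in Hz by nra.
    apply cont_R. unfold f, erlang_integrand, Rpower. auto_derive.
    assert (0 <= /r * z) by (apply Rmult_le_pos; [left; apply Rinv_0_lt_compat|]; lra). lra. }
  assert (Hs := RInt_scal (V:=R_CompleteNormedModule) h 0 (r*b) (r*r) Hh).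
  change (RInt (fun y => scal (/r) (f (/r * y + 0))) 0 (r*b)) with (RInt h 0 (r*b)) in Hlin.
  assert (E1 : @eq R (RInt f 0 b) (RInt h 0 (r*b))) by (rewrite Hlin; reflexivity).
  rewrite E1.
  change (@eq R (scal (r*r) (RInt h 0 (r*b))) (RInt (gk beta r) 0 (r*b))).
  rewrite <- Hs.
  apply RInt_ext. intros x Hx. rewrite Rmin_left, Rmax_right in Hx by nra.
  unfold h, f, gk, erlang_integrand, Rpower, scal; simpl; unfold mult; simpl.
  replace (- (r * r) * (/ r * x + 0)) with (- r * x) by (field; lra).
  replace (/ r * x + 0) with (x / r) by (field; lra).
  field. lra.
Qed.


Lemma s_le_exp s : s <= exp s.
Proof. pose proof (exp_ineq1_le s). lra. Qed.

Lemma exp_near u d : Rabs u <= d -> d <= 1/2 -> Rabs (exp u - 1) <= 2 * d.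
Proof.
  intros Hu Hd. apply Rabs_le_inv in Hu.
  pose proof (exp_ineq1_le u). pose proof (exp_ineq1_le (-d)).
  assert (exp u <= exp d) by (apply exp_le_exp; lra).
  assert (exp d * exp (-d) = 1) by (rewrite <- exp_plus; replace (d + -d) with 0 by ring; apply exp_0).
  pose proof (exp_pos d).
  assert (exp d <= 1 + 2 * d) by nra.
  apply Rabs_le. lra.
Qed.

Lemma gk_exp beta r s : gk beta r s = s * exp (- r * s + (r*r + beta*r - 1) * ln (1 + s / r)).
Proof. unfold gk. rewrite exp_plus. ring. Qed.

Lemma gk_dom beta r s : 0 < beta -> 4*beta+8 <= r -> 0 <= s ->
  gk beta r s <= exp ((beta+2)^2) * exp (- s).
Proof.
  intros Hb Hr Hs. rewrite gk_exp.
  set (x := s / r).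
  assert (Hx : 0 <= x) by (unfold x; apply Rdiv_le_0_compat; lra).
  assert (Hsx : s = r * x) by (unfold x; field; lra).
  clearbody x.
  pose proof (ln1p_upper x Hx) as U. pose proof (ln1p_nonneg x Hx) as N0. pose proof (ln1p_le x Hx) as U2.
  set (l := ln (1+x)) in *. clearbody l.
  set (Q := x^2/(2*(1+x))) in *.
  assert (HQ : Q * (2*(1+x)) = x^2) by (unfold Q; field; lra).
  assert (HQ0 : 0 <= Q) by (unfold Q; apply Rdiv_le_0_compat; nra).
  clearbody Q.
  assert (Hphi : - r * s + (r*r + beta*r - 1) * l <= beta * s - r*r*Q).
  { assert (r*r*l <= r*r*(x - Q)) by (apply Rmult_le_compat_l; nra).
    assert (beta*r*l <= beta*r*x) by (apply Rmult_le_compat_l; nra).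
    rewrite Hsx. nra. }
  assert (Hkey : (beta+2)*s - r*r*Q <= (beta+2)^2).
  { destruct (Rle_dec x 1) as [Hx1|Hx1].
    -
      assert (4*Q >= x^2) by nra.
      assert (r*r*(4*Q) >= r*r*x^2) by (apply Rmult_ge_compat_l; nra).
      assert (r*r*x^2 = s^2) by (rewrite Hsx; ring).
      pose proof (pow2_ge_0 (s/2 - (beta+2))). nra.
    - assert (4*Q >= x) by nra.
      assert (r*r*(4*Q) >= r*r*x) by (apply Rmult_ge_compat_l; nra).
      assert (r*r*x = r*s) by (rewrite Hsx; ring).
      assert ((beta+2)*s <= r*s/4) by nra.
      nra. }
  eapply Rle_trans. apply Rmult_le_compat_r. left; apply exp_pos. apply s_le_exp.
  rewrite <- !exp_plus. apply exp_le_exp. lra.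
Qed.

Lemma Gf_dom beta s : 0 < beta -> 0 <= s -> Gf beta s <= exp ((beta+2)^2) * exp (- s).
Proof.
  intros Hb Hs. unfold Gf.
  eapply Rle_trans. apply Rmult_le_compat_r. left; apply exp_pos. apply s_le_exp.
  rewrite <- !exp_plus. apply exp_le_exp. nra.
Qed.

Lemma gk_approx beta r s S : 0 < beta -> 1 <= r -> 0 <= s <= S ->
  (S^3/2 + beta*S^2/2 + S) / r <= 1/2 ->
  Rabs (gk beta r s - Gf beta s) <= S * exp (beta*S) * (2 * ((S^3/2 + beta*S^2/2 + S) / r)).
Proof.
  intros Hb Hr Hs HD. rewrite gk_exp. unfold Gf.
  set (D := S^3/2 + beta*S^2/2 + S) in *.
  set (x := s / r).
  assert (Hx : 0 <= x) by (unfold x; apply Rdiv_le_0_compat; lra).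
  assert (Hsx : s = r * x) by (unfold x; field; lra).
  clearbody x.
  pose proof (ln1p_upper x Hx) as U. pose proof (ln1p_nonneg x Hx) as N0.
  pose proof (ln1p_le x Hx) as U2. pose proof (ln1p_lower x Hx) as Lo.
  set (l := ln (1+x)) in *. clearbody l.
  assert (U3 : l <= x - x^2/2 + x^3/2).
  { assert (x^2/(2*(1+x)) >= x^2/2 - x^3/2); [|lra].
    apply Rle_ge. apply Rmult_le_reg_r with (2*(1+x)). nra.
    replace (x^2/(2*(1+x)) * (2*(1+x))) with (x^2) by (field; lra). nra. }
  set (u := (- r * s + (r*r + beta*r - 1) * l) - (beta * s - s^2/2)).
  assert (Hu : Rabs u <= D / r).
  { assert (Hur : Rabs (r * u) <= D).
    { assert (r*u = r*r*r*(l - x + x^2/2) + beta*r*r*(l - x) - r*l) . { unfold u. rewrite Hsx. field. }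
      assert (Hs3 : s^3 <= S^3) by (apply pow_incr; lra).
      assert (Hs2 : s^2 <= S^2) by (apply pow_incr; lra).
      assert (r*r*r*(l - x + x^2/2) <= r*r*r*(x^3/2)) by (apply Rmult_le_compat_l; [nra|lra]).
      assert (0 <= r*r*r*(l - x + x^2/2)) by (apply Rmult_le_pos; [nra|lra]).
      assert (beta*r*r*(-x^2/2) <= beta*r*r*(l - x)) by (apply Rmult_le_compat_l; [nra|lra]).
      assert (beta*r*r*(l - x) <= 0) by (assert (0 <= beta*r*r) by nra; nra).
      assert (r * l <= r * x) by (apply Rmult_le_compat_l; lra).
      assert (0 <= r * l) by nra.
      assert (r*r*r*(x^3/2) = s^3/2) by (rewrite Hsx; field).
      assert (beta*r*r*(-x^2/2) = - beta * s^2/2) by (rewrite Hsx; field).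
      assert (0 <= S) by lra.
      apply Rabs_le. unfold D. nra. }
    rewrite Rabs_mult, (Rabs_pos_eq r) in Hur by lra.
    apply Rmult_le_reg_l with r. lra. replace (r * (D/r)) with D by (field; lra). lra. }
  replace (s * exp (- r * s + (r * r + beta * r - 1) * l) - s * exp (beta * s - s ^ 2 / 2))
    with (s * exp (beta * s - s^2/2) * (exp u - 1)).
  2: { unfold u. rewrite Rmult_minus_distr_l, Rmult_1_r, Rmult_assoc, <- exp_plus.
       f_equal. f_equal. f_equal. ring. }
  rewrite Rabs_mult. apply Rmult_le_compat.
  - apply Rabs_pos.
  - apply Rabs_pos.
  - rewrite Rabs_pos_eq by (apply Rmult_le_pos; [lra|left; apply exp_pos]).
    apply Rmult_le_compat; try lra. left; apply exp_pos. apply exp_le_exp. nra.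
  - apply exp_near; auto.
Qed.


Lemma tail_bound f C S : contp f -> (forall x, 0 <= x -> 0 <= f x) ->
  (forall s, 0 <= s -> f s <= C * exp (- s)) -> 0 <= C -> 0 <= S ->
  forall T, 0 <= T -> RInt f 0 T <= RInt f 0 S + C * exp (- S).
Proof.
  intros Hc Hp Hd HC HS T HT.
  assert (0 <= C * exp (-S)) by (apply Rmult_le_pos; auto; left; apply exp_pos).
  destruct (Rle_dec T S).
  - pose proof (RInt_mono_b f T S Hc Hp HT r). lra.
  - rewrite (RInt_split f 0 S T) by (auto; lra).
    assert (RInt f S T <= RInt (fun s => C * exp (- s)) S T).
    { apply RInt_le. lra. apply exR; auto; lra.
      apply (ex_RInt_continuous (V:=R_CompleteNormedModule)). intros z _. apply cont_R. auto_derive. auto.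
      intros; apply Hd; lra. }
    pose proof (RInt_cexp C S T). lra.
Qed.

Lemma RInt_diff f g a b : ex_RInt f a b -> ex_RInt g a b ->
  @eq R (RInt f a b - RInt g a b) (RInt (fun x => f x - g x) a b).
Proof.
  intros Hf Hg. pose proof (RInt_minus (V:=R_CompleteNormedModule) f g a b Hf Hg) as H.
  unfold minus, plus, opp in H; simpl in H. symmetry. exact H.
Qed.

Definition Cb beta := exp ((beta+2)^2).

Lemma Gf_bounded beta : 0 < beta -> exists M, forall b, 0 <= b -> RInt (Gf beta) 0 b <= M.
Proof.
  intros Hb. exists (Cb beta * exp (-0)). intros b Hb0.
  eapply Rle_trans. apply (tail_bound (Gf beta) (Cb beta) 0); auto.
  apply Gf_cont. apply Gf_nonneg. intros; apply Gf_dom; auto. left; apply exp_pos. lra.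
  rewrite RInt_point. unfold zero; simpl. lra.
Qed.

Lemma exp_neg_le x : 0 <= x -> exp (- x) <= 1 / (1 + x).
Proof.
  intros Hx. pose proof (exp_ineq1_le x). pose proof (exp_pos x).
  assert (exp x * exp (-x) = 1) by (rewrite <- exp_plus; replace (x + -x) with 0 by ring; apply exp_0).
  apply Rmult_le_reg_l with (1+x). lra. replace ((1+x) * (1/(1+x))) with 1 by (field; lra).
  pose proof (exp_pos (-x)). nra.
Qed.

Lemma Lstar_gt1 beta : 0 < beta -> 1 < improper_int (Gf beta) 0.
Proof.
  intros Hb.
  destruct (improper_lub (Gf beta) (Gf_cont beta) (Gf_nonneg beta) (Gf_bounded beta Hb)) as [Hlow _].
  set (g0 := fun s => s * exp (- s^2/2)).
  assert (Hg0c : contp g0) by (intros x _; apply cont_R; unfold g0; auto_derive; auto).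
  assert (Hlt : RInt g0 0 1 < RInt (Gf beta) 0 1).
  { apply RInt_lt. lra. intros; apply Gf_cont; lra. intros; apply Hg0c; lra.
    intros x Hx. unfold g0, Gf. apply Rmult_lt_compat_l. lra. apply exp_increasing. nra. }
  set (d := RInt (Gf beta) 0 1 - RInt g0 0 1).
  assert (Hd : 0 < d) by (unfold d; lra).
  set (B := 2/d + 2).
  assert (HB : 1 <= B) by (unfold B; assert (0 < 2/d) by (apply Rdiv_lt_0_compat; lra); lra).
  assert (H1 : RInt (Gf beta) 0 B >= 1 - exp (- B^2/2) + d).
  { rewrite (RInt_split (Gf beta) 0 1 B) by (try apply Gf_cont; lra).
    assert (RInt g0 1 B <= RInt (Gf beta) 1 B).
    { apply RInt_le. lra. apply exR; auto; lra. apply exR. apply Gf_cont. lra. lra.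
      intros x Hx. unfold g0, Gf. apply Rmult_le_compat_l. lra. apply exp_le_exp. nra. }
    assert (Hg : @eq R (RInt g0 0 B) (1 - exp (- B^2/2))) by (apply RInt_gauss; lra).
    rewrite (RInt_split g0 0 1 B) in Hg by (auto; lra).
    unfold d. lra. }
  assert (H2 : exp (- B^2/2) < d/2).
  { replace (- B^2/2) with (- (B^2/2)) by field.
    eapply Rle_lt_trans. apply exp_neg_le. nra.
    apply Rmult_lt_reg_l with (1 + B^2/2). nra.
    replace ((1 + B^2/2) * (1 / (1 + B^2/2))) with 1 by (field; nra).
    assert (B <= 1 + B^2/2) by nra.
    assert (d/2 * B = 1 + d) by (unfold B; field; lra).
    nra. }
  pose proof (Hlow B ltac:(lra)). lra.
Qed.


Lemma key_bounds beta r : 0 < beta -> 4*beta+8 <= r ->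
  (forall S, 0 <= S -> RInt (gk beta r) 0 S <= r*r * improper_int (erlang_integrand (r*r + beta*r) (r*r)) 0) /\
  (forall S, 0 <= S -> r*r * improper_int (erlang_integrand (r*r + beta*r) (r*r)) 0 <= RInt (gk beta r) 0 S + Cb beta * exp (- S)).
Proof.
  intros Hb Hr.
  assert (Hr0 : 0 < r) by lra.
  assert (Hl : 0 < r*r) by nra.
  assert (Hn : 1 < r*r + beta*r) by nra.
  destruct (erl_lub _ _ Hl Hn) as [Hlow Hup].
  set (I := improper_int (erlang_integrand (r*r + beta*r) (r*r)) 0) in *.
  split.
  - intros S HS.
    assert (Hb0 : 0 <= S / r) by (apply Rdiv_le_0_compat; lra).
    pose proof (bridge beta r (S/r) Hr0 Hb0) as E.
    replace (r * (S/r)) with S in E by (field; lra).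
    rewrite <- E. apply Rmult_le_compat_l. lra. apply Hlow; auto.
  - intros S HS.
    assert (HC : 0 <= Cb beta) by (left; apply exp_pos).
    assert (I <= (RInt (gk beta r) 0 S + Cb beta * exp (- S)) / (r*r)).
    { apply Hup. intros b Hb0.
      pose proof (bridge beta r b Hr0 Hb0) as E.
      apply Rmult_le_reg_l with (r*r). auto.
      replace (r * r * ((RInt (gk beta r) 0 S + Cb beta * exp (- S)) / (r * r)))
        with (RInt (gk beta r) 0 S + Cb beta * exp (- S)) by (field; lra).
      rewrite E. apply (tail_bound (gk beta r) (Cb beta) S); auto.
      apply gk_cont; lra. intros; apply gk_nonneg; auto. intros; apply gk_dom; auto. nra. }
    apply Rmult_le_compat_l with (r := r*r) in H. 2: lra.
    replace (r * r * ((RInt (gk beta r) 0 S + Cb beta * exp (- S)) / (r * r)))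
        with (RInt (gk beta r) 0 S + Cb beta * exp (- S)) in H by (field; lra).
    exact H.
Qed.

Lemma case_key a beta : 0 < a -> 0 < beta ->
  exists L, 0 < L < 1 /\
  Un_cv (fun m => alpha_bar (INR m * a + beta * sqrt (INR m * a)) (INR m * a)) L.
Proof.
  intros Ha Hb.
  pose proof (Lstar_gt1 beta Hb) as HL1.
  destruct (improper_lub (Gf beta) (Gf_cont beta) (Gf_nonneg beta) (Gf_bounded beta Hb)) as [Glow Gup].
  set (Ls := improper_int (Gf beta) 0) in *.
  assert (HC : 0 < Cb beta) by apply exp_pos.
  set (C := Cb beta) in *.
  assert (Gup2 : forall S, 0 <= S -> Ls <= RInt (Gf beta) 0 S + C * exp (- S)).
  { intros S HS. apply Gup. apply tail_bound; auto. apply Gf_cont. apply Gf_nonneg.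
    intros; apply Gf_dom; auto. lra. }
  exists (/ Ls). split. split. apply Rinv_0_lt_compat; lra.
  rewrite <- Rinv_1. apply Rinv_lt_contravar; lra.
  intros eps Heps.
  set (eta := Rmin eps ((Ls - 1)/2)).
  assert (Heta : 0 < eta) by (unfold eta; apply Rmin_glb_lt; lra).
  assert (Heta1 : eta <= eps) by apply Rmin_l.
  assert (Heta2 : eta <= (Ls-1)/2) by apply Rmin_r.
  set (S := 2 * C / eta).
  assert (HS : 0 < S) by (unfold S; apply Rdiv_lt_0_compat; lra).
  assert (HCS : C * exp (- S) < eta / 2).
  { pose proof (exp_neg_le S (Rlt_le _ _ HS)).
    assert (C * exp (-S) <= C * (1/(1+S))) by (apply Rmult_le_compat_l; lra).
    assert (C * (1/(1+S)) < eta/2); [|lra].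
    apply Rmult_lt_reg_l with (1+S). lra.
    replace ((1+S) * (C * (1/(1+S)))) with C by (field; lra).
    assert (S * eta = 2 * C) by (unfold S; field; lra). nra. }
  set (D := S^3/2 + beta*S^2/2 + S).
  assert (HD : 0 < D) by (unfold D; assert (0 < S^3) by (apply pow_lt; lra); nra).
  set (E := S * S * exp (beta * S)).
  assert (HE : 0 < E) by (unfold E; apply Rmult_lt_0_compat; [nra|apply exp_pos]).
  set (R0 := Rmax (4*beta+8) (Rmax (2*D) (4*E*D/eta + 1))).
  assert (HR1 : 4*beta+8 <= R0) by apply Rmax_l.
  assert (HR2 : 2*D <= R0) by (eapply Rle_trans; [apply Rmax_l|apply Rmax_r]).
  assert (HR3 : 4*E*D/eta + 1 <= R0) by (eapply Rle_trans; [apply Rmax_r|apply Rmax_r]).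
  destruct (large_m (R0*R0/a)) as [N HN].
  exists N. intros m Hm. specialize (HN m Hm).
  remember (INR m) as M eqn:HM.
  assert (HMa : R0*R0 <= M*a).
  { apply Rmult_le_compat_r with (r := a) in HN; [|lra].
    replace (R0*R0/a*a) with (R0*R0) in HN by (field; lra). lra. }
  assert (HMa0 : 0 <= M * a) by nra.
  remember (sqrt (M*a)) as r eqn:Hr_def.
  assert (Hrr : M*a = r*r) by (rewrite Hr_def; symmetry; apply sqrt_sqrt; auto).
  assert (HrR : R0 <= r).
  { rewrite Hr_def. rewrite <- (sqrt_square R0) by lra. apply sqrt_le_1_alt. auto. }
  rewrite Hrr.
  destruct (key_bounds beta r Hb ltac:(lra)) as [K1 K2].
  set (I := improper_int (erlang_integrand (r*r + beta*r) (r*r)) 0) in *.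
  specialize (K1 S (Rlt_le _ _ HS)). specialize (K2 S (Rlt_le _ _ HS)).
  pose proof (Glow S (Rlt_le _ _ HS)) as G1. pose proof (Gup2 S (Rlt_le _ _ HS)) as G2.
  assert (Hr0 : 0 < r) by lra.
  assert (Hdiff : Rabs (RInt (gk beta r) 0 S - RInt (Gf beta) 0 S) < eta/2).
  { rewrite RInt_diff.
    2: { apply exR. apply gk_cont; lra. lra. lra. }
    2: { apply exR. apply Gf_cont. lra. lra. }
    eapply Rle_lt_trans. apply abs_RInt_le_const. lra.
    { apply (ex_RInt_minus (V:=R_NormedModule)); (apply exR; [try apply gk_cont; try apply Gf_cont|..]; lra). }
    intros t Ht. cbv beta. apply (gk_approx beta r t S); auto. lra.
    { apply Rmult_le_reg_l with r. lra. fold D. replace (r * (D/r)) with D by (field; lra). lra. }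
    fold D. replace ((S - 0) * (S * exp (beta * S) * (2 * (D / r)))) with (2 * E * D / r) by (unfold E; field; lra).
    apply Rmult_lt_reg_l with (r / eta * 2). apply Rmult_lt_0_compat. apply Rdiv_lt_0_compat; lra. lra.
    replace (r / eta * 2 * (2 * E * D / r)) with (4 * E * D / eta) by (field; lra).
    replace (r / eta * 2 * (eta / 2)) with r by (field; lra). lra. }
  apply Rabs_def2 in Hdiff as [Hd1 Hd2].
  change (Cb beta) with C in K2.
  set (x := r*r*I) in *.
  assert (Hx1 : Ls - eta < x) by lra.
  assert (Hx : 1 < x) by lra.
  assert (Hxe : - eta < x - Ls < eta) by lra.
  unfold alpha_bar. fold I. fold x.
  rewrite Rmin_right.
  2: { left. rewrite <- Rinv_1. apply Rinv_lt_contravar; lra. }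
  unfold Rdist.
  set (q := / x - / Ls).
  assert (Hq : q * (x * Ls) = Ls - x) by (unfold q; field; lra).
  assert (HP : 1 < x * Ls) by nra.
  apply Rabs_def1.
  - destruct (Rlt_le_dec q eps); auto. exfalso. nra.
  - destruct (Rlt_le_dec (-eps) q); auto. exfalso. nra.
Qed.


Theorem corollary1
  (Omega : Type) (Omega_enum : list Omega) (Omega_fin : forall w, In w Omega_enum)
  (Lambda0 : Omega -> R) (Lambda0_pos : forall w, 0 < Lambda0 w)
  (beta : R) (beta_pos : 0 < beta) (wkey : Omega) :
  let Lambda := fun (m : nat) (w : Omega) => INR m * Lambda0 w in
  let n := fun m : nat => Lambda m wkey + beta * sqrt (Lambda m wkey) in
  (exists L, 0 < L < 1 /\ Un_cv (fun m => alpha_bar (n m) (Lambda m wkey)) L) /\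
  (forall w, Lambda0 w > Lambda0 wkey ->
     Un_cv (fun m => alpha_bar (n m) (Lambda m w)) 1) /\
  (forall w, Lambda0 w < Lambda0 wkey ->
     Un_cv (fun m => alpha_bar (n m) (Lambda m w)) 0).
Proof.
  intros Lambda n. subst Lambda n. cbv beta.
  split; [|split].
  - apply case_key; auto.
  - intros w Hw. apply case_big; auto.
  - intros w Hw. apply case_small; auto.
Qed.
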